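(* For every $n\ge1$ there is a formula $\Phi_n'\in\mathrm{LTL}[\mathsf{F}]$ such that $\Phi_n'\equiv\Phi_n$ (i.e. $\mathcal{L}(\Phi_n')=\mathcal{L}(\Phi_n)$) and $\mathrm{size}(\Phi_n')<2^{n+1}(n+2)^2$.
   Context: Fix $n\ge1$ and atomic propositions $AP=\{\tilde p,\tilde q\}\cup\{p_1,\dots,p_n\}\cup\{q_1,\dots,q_n\}$ (all distinct), $\Sigma=2^{AP}$. Formulae are built from literals $p,\neg p$ ($p\in AP$) with $\land,\lor$ and temporal operators $\mathsf{F}$ (''at some $j$ with $i\le j<|\sigma|$'') and $\mathsf{O}$ (''at some $j$ with $0\le j\le i$''), interpreted on finite non-empty traces $\sigma\in\Sigma^+$ at positions $0\le i<|\sigma|$; $\mathcal{L}(\phi)=\{\sigma\in\Sigma^+:\sigma,0\models\phi\}$. $\mathrm{LTL}[\mathsf{F}]$ denotes formulae using only the temporal operator $\mathsf{F}$. Size: literals 1, unary operators add 1, $\mathrm{size}(\phi_1\circ\phi_2)=\mathrm{size}(\phi_1)+\mathrm{size}(\phi_2)+1$ for $\circ\in\{\land,\lor\}$. Define $\Phi_n := \mathsf{F}\big(\tilde q\land\bigwedge_{i=1}^n\big((q_i\land\mathsf{O}(\tilde p\land p_i))\lor(\neg q_i\land\mathsf{O}(\tilde p\land\neg p_i))\big)\big)$. *)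

(* Defs.v *)
From mathcomp Require Import all_boot.
Set Implicit Arguments. Unset Strict Implicit. Unset Printing Implicit Defensive.

(* Atomic propositions AP = {p~, q~} ∪ {p_1..p_n} ∪ {q_1..q_n};
   p_i / q_i (1 <= i <= n) are represented by P i / Q i with i : 'I_n
   (0-based index, i.e. P i stands for p_{i+1}). *)
Inductive ap (n : nat) : Type :=
| PT : ap n
| QT : ap n
| P : 'I_n -> ap n
| Q : 'I_n -> ap n.

Inductive form (A : Type) : Type :=
| Lit : bool -> A -> form A       (* Lit true a = a, Lit false a = ¬a *)
| And : form A -> form A -> form A
| Or  : form A -> form A -> form A
| Fut : form A -> form A
| Once : form A -> form A.

(* Letters of Σ = 2^AP are valuations A -> bool; traces are sequences of letters. *)
Definition letter (A : Type) := A -> bool.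
Definition trace (A : Type) := seq (letter A).

Fixpoint sat (A : Type) (s : trace A) (i : nat) (phi : form A) : Prop :=
  match phi with
  | Lit b a => (nth (fun _ => false) s i a) = b
  | And f g => sat s i f /\ sat s i g
  | Or f g => sat s i f \/ sat s i g
  | Fut f => exists j, i <= j /\ j < size s /\ sat s j f
  | Once f => exists j, j <= i /\ sat s j f
  end.

Definition lang (A : Type) (phi : form A) (s : trace A) : Prop :=
  0 < size s /\ sat s 0 phi.

Fixpoint fsize (A : Type) (phi : form A) : nat :=
  match phi with
  | Lit _ _ => 1
  | And f g => fsize f + fsize g + 1
  | Or f g => fsize f + fsize g + 1
  | Fut f => (fsize f).+1
  | Once f => (fsize f).+1
  end.

Fixpoint ltlF (A : Type) (phi : form A) : bool :=
  match phi with
  | Lit _ _ => true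
  | And f g => ltlF f && ltlF g
  | Or f g => ltlF f && ltlF g
  | Fut f => ltlF f
  | Once _ => false
  end.

Fixpoint bigAnd (A : Type) (x : form A) (xs : seq (form A)) : form A :=
  match xs with
  | [::] => x
  | y :: ys => And x (bigAnd y ys)
  end.

Definition clause (n : nat) (i : 'I_n) : form (ap n) :=
  Or (And (Lit true (Q i)) (Once (And (Lit true (PT n)) (Lit true (P i)))))
     (And (Lit false (Q i)) (Once (And (Lit true (PT n)) (Lit false (P i))))).

Definition Phi (n : nat) : form (ap n) :=
  match enum 'I_n with
  | [::] => Fut (Lit true (QT n))
  | c :: cs => Fut (And (Lit true (QT n)) (bigAnd (clause c) (map (@clause n) cs)))
  end.

(* Main.v *)
Require Import Defs.
From mathcomp Require Import all_boot.
From mathcomp Require Import zify.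
Set Implicit Arguments. Unset Strict Implicit.

Fixpoint orL (A : Type) (x : form A) (xs : seq (form A)) : form A :=
  match xs with
  | [::] => x
  | y :: ys => Or x (orL y ys)
  end.

Lemma sat_bigAnd (A : Type) (T : eqType) (f : T -> form A) s i a l :
  sat s i (bigAnd (f a) (map f l)) <-> forall y, y \in a :: l -> sat s i (f y).
Proof.
elim: l a => [|b l IH] a /=.
  split; [move=> H y; rewrite inE => /eqP -> // | move=> H; apply H; exact: mem_head].
split.
  move=> [Ha /IH Hl] y; rewrite inE => /orP [/eqP -> //|]; exact: Hl.
move=> H; split; [apply H; exact: mem_head|].
apply/IH => y Hy; by apply H; rewrite inE Hy orbT.
Qed.

Lemma sat_orL (A : Type) (T : eqType) (f : T -> form A) s i a l :
  sat s i (orL (f a) (map f l)) <-> exists y, y \in a :: l /\ sat s i (f y).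
Proof.
elim: l a => [|b l IH] a /=.
  split; [move=> H; exists a; split=> //; exact: mem_head|].
  by move=> [y [] ]; rewrite inE => /eqP ->.
split.
  move=> [Ha|/IH [y [Hy1 Hy2]]]; first by exists a; rewrite mem_head.
  by exists y; rewrite inE Hy1 orbT.
move=> [y []]; rewrite inE => /orP [/eqP -> H|Hy H]; first by left.
by right; apply/IH; exists y.
Qed.

Lemma ltlF_bigAnd (A : Type) (T : Type) (f : T -> form A) a l :
  (forall y, ltlF (f y)) -> ltlF (bigAnd (f a) (map f l)).
Proof. by move=> H; elim: l a => [|b l IH] a /=; rewrite ?H ?IH. Qed.

Lemma ltlF_orL (A : Type) (T : Type) (f : T -> form A) a l :
  (forall y, ltlF (f y)) -> ltlF (orL (f a) (map f l)).
Proof. by move=> H; elim: l a => [|b l IH] a /=; rewrite ?H ?IH. Qed.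

Lemma fsize_bigAnd (A : Type) (T : Type) (f : T -> form A) a l c :
  (forall y, fsize (f y) = c) -> fsize (bigAnd (f a) (map f l)) = c * (size l).+1 + size l.
Proof. move=> H; elim: l a => [|b l IH] a /=; rewrite ?H ?IH; lia. Qed.

Lemma fsize_orL (A : Type) (T : Type) (f : T -> form A) a l c :
  (forall y, fsize (f y) = c) -> fsize (orL (f a) (map f l)) = c * (size l).+1 + size l.
Proof. move=> H; elim: l a => [|b l IH] a /=; rewrite ?H ?IH; lia. Qed.

Definition ql n (b : {ffun 'I_n -> bool}) (i : 'I_n) : form (ap n) := Lit (b i) (Q i).
Definition QB n (c : 'I_n) cs (b : {ffun 'I_n -> bool}) := And (Lit true (QT n)) (bigAnd (ql b c) (map (ql b) cs)).
Definition Kf n (c : 'I_n) cs (b : {ffun 'I_n -> bool}) i :=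
  Fut (And (And (Lit true (PT n)) (Lit (b i) (P i))) (Fut (QB c cs b))).
Definition Df n (c : 'I_n) cs (b : {ffun 'I_n -> bool}) := bigAnd (Kf c cs b c) (map (Kf c cs b) cs).

Theorem lemma1 (n : nat) (hn : 1 <= n) :
  exists phi' : form (ap n),
    ltlF phi' /\
    (forall s : trace (ap n), lang phi' s <-> lang (Phi n) s) /\
    fsize phi' < 2 ^ n.+1 * (n + 2) ^ 2.
Proof.
have [c [cs Ecs]] : exists c cs, enum 'I_n = c :: cs.
  have : Ordinal hn \in enum 'I_n by rewrite mem_enum.
  by case: (enum 'I_n) => // c cs _; exists c, cs.
have [b0 [bs Ebs]] : exists b0 bs, enum {ffun 'I_n -> bool} = b0 :: bs.
  have : [ffun=> true] \in enum {ffun 'I_n -> bool} by rewrite mem_enum.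
  by case: (enum _) => // c' cs' _; exists c', cs'.
have szc : (size cs).+1 = n by have := size_enum_ord n; rewrite Ecs.
have szb : (size bs).+1 = 2 ^ n.
  by have := card_ffun 'I_n bool; rewrite cardE Ebs card_bool card_ord.
have inc : forall i, i \in c :: cs by move=> i; rewrite -Ecs mem_enum.
have inb : forall b, b \in b0 :: bs by move=> b; rewrite -Ebs mem_enum.
exists (orL (Df c cs b0) (map (Df c cs) bs)).
split; first by apply: ltlF_orL => b; apply: ltlF_bigAnd => i /=;
  apply: ltlF_bigAnd.
split; last first.
  have HQ : forall b, fsize (QB c cs b) = 2 * n + 1.
    move=> b; rewrite /= (@fsize_bigAnd _ _ _ _ _ 1) //; lia.
  have HK : forall b i, fsize (Kf c cs b i) = 2 * n + 7.
    move=> b i; rewrite /Kf /QB /= (@fsize_bigAnd _ _ _ _ _ 1) //; lia.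
  rewrite (@fsize_orL _ _ _ _ _ (n * (2 * n + 7) + (n - 1))); last first.
    move=> b; rewrite /Df (@fsize_bigAnd _ _ _ _ _ (2 * n + 7)) //; lia.
  rewrite expnS; nia.
move=> s; rewrite /lang /Phi Ecs; split; move=> [Hs H]; split => //.
- move/sat_orL: H => [b [_ /sat_bigAnd Hb]].
  pose Qj j := (nth (fun _ => false) s j (QT n)) &&
                [forall i, nth (fun _ => false) s j (Q i) == b i].
  have Hk : forall i, exists k, k < size s /\ nth (fun _ => false) s k (PT n) = true
      /\ nth (fun _ => false) s k (P i) = b i /\
      exists j, k <= j /\ j < size s /\ Qj j.
    move=> i; have := Hb i (inc i); rewrite /Kf /QB /=.
    move=> [k [_ [Hk [[H1 H2] [j [Hkj [Hj [HQT /sat_bigAnd Hq]]]]]]]].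
    exists k; do 3!(split => //); exists j; do 2!(split => //).
    rewrite /Qj HQT /=; apply/forallP => i'; apply/eqP; exact: (Hq i' (inc i')).
  pose Pj j := (j < size s) && Qj j.
  have ex : exists j, Pj j.
    have [k [_ [_ [_ [j [_ [Hj Hq]]]]]]] := Hk c; exists j; by rewrite /Pj Hj Hq.
  have ub : forall j, Pj j -> j <= size s by move=> j /andP [/ltnW].
  case: (ex_maxnP ex ub) => jm /andP [Hjm /andP [HQT /forallP HQ]] Hmax.
  exists jm; do 2!(split => //); split => //.
  apply/sat_bigAnd => i _ /=.
  have [k [_ [HP [HPi [j [Hkj [Hj Hq]]]]]]] := Hk i.
  have Hjjm : j <= jm by apply: Hmax; rewrite /Pj Hj Hq.
  have := HQ i; move/eqP=> ->.
  case Eb: (b i); [left|right]; (split => //; exists k; split; [lia|]; rewrite HP HPi Eb //).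
- move: H => [j [_ [Hj [HQT /sat_bigAnd Hc]]]].
  apply/sat_orL; exists [ffun i => nth (fun _ => false) s j (Q i)]; split; first exact: inb.
  apply/sat_bigAnd => i _; rewrite /Kf /=.
  have := Hc i (inc i); rewrite /clause /=.
  move=> [[Hqi [k [Hkj [HP HPi]]]] | [Hqi [k [Hkj [HP HPi]]]]];
  (exists k; split => //; split; [lia|]; split; [rewrite ffunE HP HPi Hqi //|];
   exists j; do 2!(split => //); split => //;
   apply/sat_bigAnd => i' _; rewrite /ql /= ffunE //).
Qed.
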